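(* The sets $$R_{1,0}=\{\lfloor n\varphi\rfloor+n\mid n\in\mathbb N\}=\{2,5,7,10,13,\dots\},\quad R_{1,1}=\{\lfloor n\varphi\rfloor+n-1\mid n\in\mathbb N\}=\{1,4,6,9,12,\dots\},$$ $$R_{2,0}=\{2\lfloor n\varphi\rfloor+n\mid n\in\mathbb N\}=\{3,8,11,16,21,\dots\}$$ form a partition of $\mathbb N$ (they are pairwise disjoint and their union is $\mathbb N$).
   Context: $\mathbb N=\{1,2,\dots\}$ and $\varphi=\frac{1+\sqrt5}{2}$ is the golden ratio. (In general $R_{i,j}$ denotes the range of $n\mapsto F(i+1)\lfloor n\varphi\rfloor+F(i)n-j$, $F$ the Fibonacci numbers with $F(0)=0,F(1)=F(2)=1$.) *)

(* Defs.v *)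
From Stdlib Require Import Reals ZArith Lia Lra.
Open Scope R_scope.

Definition phi : R := (1 + sqrt 5) / 2.

(* floor of a real, as an integer: Int_part x = up x - 1 = floor x *)
Definition floorZ (x : R) : Z := Int_part x.

Fixpoint fib (n : nat) : Z :=
  match n with
  | O => 0%Z
  | S O => 1%Z
  | S ((S k) as k') => (fib k' + fib k)%Z
  end.

Definition Rij (i : nat) (j : Z) (m : Z) : Prop :=
  exists n : Z, (1 <= n)%Z /\
    m = (fib (S i) * floorZ (IZR n * phi) + fib i * n - j)%Z.

(* Main.v *)
Require Import Defs.
From Stdlib Require Import Reals ZArith Lia Lra Psatz.
Open Scope R_scope.

Lemma sq_mod5 : forall n k : Z, (5*n*n = k*k)%Z -> (exists q, k = 5*q)%Z.
Proof.
  intros n k H.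
  pose proof (Z_div_mod_eq_full k 5) as E.
  pose proof (Z.mod_pos_bound k 5 ltac:(lia)) as B.
  set (q := (k / 5)%Z) in *. set (r := (k mod 5)%Z) in *.
  exists q.
  assert (r = 0 \/ r = 1 \/ r = 2 \/ r = 3 \/ r = 4)%Z as Hr by lia.
  rewrite E in H.
  destruct Hr as [Hr|[Hr|[Hr|[Hr|Hr]]]]; rewrite Hr in H, E; try lia.
Qed.

Lemma no_sqrt5 : forall N : nat, forall n k : Z,
  (Z.abs_nat n <= N)%nat -> (5*n*n = k*k)%Z -> n = 0%Z.
Proof.
  induction N; intros n k Hn H.
  - lia.
  - destruct (sq_mod5 n k H) as [q Hq]. subst k.
    assert (H2 : (5*q*q = n*n)%Z) by lia.
    destruct (sq_mod5 q n H2) as [p Hp]. subst n.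
    assert (H3 : (5*p*p = q*q)%Z) by lia.
    destruct (Z.eq_dec p 0) as [->|Hp0]; [lia|].
    assert (p = 0%Z). { apply (IHN p q); [lia|exact H3]. }
    lia.
Qed.

Lemma phi_gt1 : 1 < phi.
Proof.
  unfold phi. assert (1 < sqrt 5).
  { rewrite <- sqrt_1. apply sqrt_lt_1; lra. }
  lra.
Qed.

Lemma phi_lt2 : phi < 2.
Proof.
  unfold phi. assert (sqrt 5 < 3).
  { rewrite <- (sqrt_square 3) by lra. apply sqrt_lt_1; lra. }
  lra.
Qed.

Lemma phi_sq : phi * phi = phi + 1.
Proof.
  unfold phi. assert (sqrt 5 * sqrt 5 = 5) by (apply sqrt_sqrt; lra).
  nra.
Qed.

Lemma irr : forall n k : Z, n <> 0%Z -> IZR n * phi <> IZR k.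
Proof.
  intros n k Hn H. unfold phi in H.
  assert (S5 : sqrt 5 * sqrt 5 = 5) by (apply sqrt_sqrt; lra).
  assert (E : IZR n * sqrt 5 = IZR (2*k - n)).
  { rewrite minus_IZR, mult_IZR. lra. }
  assert (E2 : IZR (5*n*n) = IZR ((2*k-n)*(2*k-n))).
  { rewrite !mult_IZR, <- E. simpl. nra. }
  apply eq_IZR in E2.
  apply Hn. apply (no_sqrt5 (Z.abs_nat n) n (2*k-n)); lia.
Qed.

Lemma floor_spec : forall x, IZR (floorZ x) <= x < IZR (floorZ x) + 1.
Proof.
  intros x. unfold floorZ. pose proof (base_Int_part x). lra.
Qed.

Lemma floor_unique : forall x k, IZR k <= x < IZR k + 1 -> floorZ x = k.
Proof.
  intros x k Hk. pose proof (floor_spec x) as Hf.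
  set (j := floorZ x) in *.
  assert (IZR k < IZR (j + 1)) by (rewrite plus_IZR; lra).
  assert (IZR j < IZR (k + 1)) by (rewrite plus_IZR; lra).
  apply lt_IZR in H. apply lt_IZR in H0. lia.
Qed.

Definition A (n : Z) : Z := floorZ (IZR n * phi).

Lemma A_strict : forall n, (1 <= n)%Z ->
  IZR (A n) < IZR n * phi < IZR (A n) + 1.
Proof.
  intros n Hn. pose proof (floor_spec (IZR n * phi)) as H. unfold A.
  split; [|lra]. destruct H as [H _].
  destruct H as [H|H]; [exact H|]. exfalso.
  apply (irr n (floorZ (IZR n * phi))); [lia|lra].
Qed.

Lemma A_ge : forall n, (0 <= n)%Z -> (n <= A n)%Z.
Proof.
  intros n Hn. pose proof (floor_spec (IZR n * phi)) as H. unfold A in *.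
  pose proof phi_gt1. apply IZR_le in Hn.
  assert (IZR n < IZR (floorZ (IZR n * phi) + 1)) by (rewrite plus_IZR; nra).
  apply lt_IZR in H1. lia.
Qed.

Lemma A_mono : forall n n', (n <= n')%Z -> (n' - n <= A n' - A n)%Z.
Proof.
  intros n n' H. unfold A.
  pose proof (floor_spec (IZR n * phi)). pose proof (floor_spec (IZR n' * phi)).
  pose proof phi_gt1.
  assert (IZR (n'-n) * 1 <= IZR (n'-n) * phi).
  { apply Rmult_le_compat_l; [apply IZR_le; lia| lra]. }
  rewrite minus_IZR in H3.
  assert (IZR (floorZ (IZR n * phi) + (n'-n)) < IZR (floorZ (IZR n' * phi) + 1)).
  { rewrite !plus_IZR, minus_IZR. lra. }
  apply lt_IZR in H4. lia.
Qed.

Lemma AA : forall n, (1 <= n)%Z -> A (A n) = (A n + n - 1)%Z.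
Proof.
  intros n Hn. pose proof (A_strict n Hn) as [H1 H2].
  pose proof phi_gt1. pose proof phi_lt2. pose proof phi_sq.
  unfold A at 1. apply floor_unique.
  rewrite minus_IZR, plus_IZR.
  set (a := IZR (A n)) in *. set (x := IZR n) in *.
  (* a(phi-1) > x - 1 and a(phi-1) < x *)
  assert (L : (x*phi - 1)*(phi-1) < a*(phi-1)) by (apply Rmult_lt_compat_r; lra).
  assert (U : a*(phi-1)*phi < x*phi).
  { replace (a*(phi-1)*phi) with a by (transitivity (a*(phi*phi-phi)); [rewrite phi_sq; ring| ring]). lra. }
  assert (U' : a*(phi-1) < x) by nra.
  assert (Q : x*phi*phi = x*phi + x) by (rewrite Rmult_assoc, H3; ring). split; nra.
Qed.

Lemma AB : forall n, (1 <= n)%Z -> A (A n + n) = (2 * A n + n)%Z.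
Proof.
  intros n Hn. pose proof (A_strict n Hn) as [H1 H2].
  pose proof phi_gt1. pose proof phi_lt2. pose proof phi_sq.
  unfold A at 1. apply floor_unique.
  rewrite !plus_IZR, mult_IZR.
  set (a := IZR (A n)) in *. set (x := IZR n) in *.
  (* (a+x)phi = a*phi + x*phi ; a*phi = a + a(phi-1) *)
  assert (L : a*(phi-1)*phi < x*phi).
  { replace (a*(phi-1)*phi) with a by (transitivity (a*(phi*phi-phi)); [rewrite phi_sq; ring| ring]). lra. }
  assert (L' : a*(phi-1) < x) by nra.
  assert (U : x*phi*(phi-1) < (a+1)*(phi-1)) by (apply Rmult_lt_compat_r; lra).
  assert (Q : x*phi*phi = x*phi + x) by (rewrite Rmult_assoc, H3; ring).
  assert (U' : x < (a+1)*(phi-1)) by nra.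
  simpl. split; nra.
Qed.

Lemma beatty : forall m, (1 <= m)%Z ->
  (exists n, (1 <= n)%Z /\ A n = m) \/ (exists n, (1 <= n)%Z /\ (A n + n)%Z = m).
Proof.
  intros m Hm.
  pose proof phi_gt1. pose proof phi_lt2. pose proof phi_sq.
  set (n := floorZ (IZR (m+1) / phi)).
  pose proof (floor_spec (IZR (m+1) / phi)) as [F1 F2]. fold n in F1, F2.
  assert (Mp : IZR (m+1) = IZR (m+1) / phi * phi) by (field; lra).
  assert (G1 : IZR n * phi <= IZR (m+1)).
  { rewrite Mp. apply Rmult_le_compat_r; lra. }
  assert (G2 : IZR (m+1) < (IZR n + 1) * phi).
  { rewrite Mp. apply Rmult_lt_compat_r; lra. }
  rewrite plus_IZR in G1, G2.
  apply IZR_le in Hm as Hm'.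
  assert (n0 : (0 <= n)%Z).
  { assert (0 < IZR n + 1) by nra.
    assert (IZR (-1) < IZR n) by (simpl; lra). apply lt_IZR in H3. lia. }
  destruct (Rlt_le_dec (IZR m) (IZR n * phi)) as [C|C].
  - left. exists n.
    assert (n1 : (1 <= n)%Z).
    { destruct (Z.eq_dec n 0) as [E|E]; [|lia]. rewrite E in C. lra. }
    split; [exact n1|]. unfold A. apply floor_unique. split; [lra|].
    destruct G1 as [G1|G1]; [lra|]. exfalso.
    apply (irr n (m+1)); [lia|]. rewrite plus_IZR. exact G1.
  - right. exists (m - n)%Z.
    assert (nm : (n < m)%Z).
    { destruct (Z_lt_le_dec n m) as [h|h]; [exact h|]. exfalso.
      apply IZR_le in h. apply IZR_le in n0. nra. }
    split; [lia|].
    assert (A (m - n) = n) as ->; [|lia].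
    unfold A. apply floor_unique. rewrite minus_IZR.
    set (x := IZR n) in *. set (y := IZR m) in *.
    split.
    + assert (0 <= phi * (y - x*phi)) by nra. nra.
    + assert (phi * (y + 1 - (x+1)*phi) < 0) by nra. nra.
Qed.

Lemma disj : forall k n, (1 <= k)%Z -> (1 <= n)%Z -> A k <> (A n + n)%Z.
Proof.
  intros k n Hk Hn E.
  pose proof phi_gt1. pose proof phi_lt2. pose proof phi_sq.
  pose proof (A_strict k Hk) as [K1 K2]. pose proof (A_strict n Hn) as [N1 N2].
  rewrite E, plus_IZR in K1, K2.
  set (m := IZR (A n)) in *. set (x := IZR n) in *. set (y := IZR k) in *.
  (* y > (m+x)(phi-1), x > (m+x)(2-phi) *)
  assert (a1 : (m+x)*(phi-1) < y*phi*(phi-1)) by (apply Rmult_lt_compat_r; lra).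
  assert (a2 : y*phi*(phi-1) < (m+x+1)*(phi-1)) by (apply Rmult_lt_compat_r; lra).
  assert (b1 : (m+x)*(2-phi) < (x*phi + x)*(2-phi)) by (apply Rmult_lt_compat_r; lra).
  assert (b2 : (x*phi + x)*(2-phi) < (m+x+1)*(2-phi)) by (apply Rmult_lt_compat_r; lra).
  assert (e1 : y*phi*(phi-1) = y) by (transitivity (y*(phi*phi-phi)); [ring| rewrite phi_sq; ring]).
  assert (e2 : (x*phi+x)*(2-phi) = x) by (transitivity (x*(phi+1 - phi*phi) + x); [ring| rewrite phi_sq; ring]).
  rewrite e1 in a1, a2. rewrite e2 in b1, b2.
  assert (IZR (A n + n) < IZR (k + n)) by (rewrite !plus_IZR; fold m x y; nra).
  assert (IZR (k + n) < IZR (A n + n + 1)) by (rewrite !plus_IZR; fold m x y; nra).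
  apply lt_IZR in H2. apply lt_IZR in H3. lia.
Qed.

Lemma A_inj : forall k k', A k = A k' -> k = k'.
Proof.
  intros k k' E. destruct (Z.lt_total k k') as [h|[h|h]]; auto.
  - pose proof (A_mono k k' ltac:(lia)). lia.
  - pose proof (A_mono k' k ltac:(lia)). lia.
Qed.

Theorem corollary3p3 :
  (* each of the three sets is contained in N = {1,2,...} *)
  (forall m : Z, (Rij 1 0%Z m \/ Rij 1 1%Z m \/ Rij 2 0%Z m) -> (1 <= m)%Z) /\
  (* their union is N *)
  (forall m : Z, (1 <= m)%Z -> Rij 1 0%Z m \/ Rij 1 1%Z m \/ Rij 2 0%Z m) /\
  (* pairwise disjoint *)
  (forall m : Z, ~ (Rij 1 0%Z m /\ Rij 1 1%Z m)) /\
  (forall m : Z, ~ (Rij 1 0%Z m /\ Rij 2 0%Z m)) /\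
  (forall m : Z, ~ (Rij 1 1%Z m /\ Rij 2 0%Z m)).
Proof.
  unfold Rij; cbn [fib].
  assert (RA : forall n, floorZ (IZR n * phi) = A n) by reflexivity.
  setoid_rewrite RA.
  split; [|split; [|split; [|split]]].
  - intros m [[n [Hn ->]]|[[n [Hn ->]]|[n [Hn ->]]]];
      pose proof (A_ge n ltac:(lia)); lia.
  - intros m Hm. destruct (beatty m Hm) as [[k [Hk Ek]]|[n [Hn En]]].
    + destruct (beatty k Hk) as [[n [Hn En]]|[n [Hn En]]].
      * right; left. exists n. split; [exact Hn|].
        subst. rewrite AA by exact Hn. lia.
      * right; right. exists n. split; [exact Hn|].
        subst. rewrite AB by exact Hn. lia.
    + left. exists n. split; [exact Hn| lia].
  - intros m [[n [Hn E1]] [n' [Hn' E2]]].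
    destruct (Z.lt_total n n') as [h|[h|h]].
    + pose proof (A_mono n n' ltac:(lia)). lia.
    + subst. lia.
    + pose proof (A_mono n' n ltac:(lia)). lia.
  - intros m [[n [Hn E1]] [n' [Hn' E2]]].
    apply (disj (A n' + n') n); [pose proof (A_ge n' ltac:(lia)); lia | exact Hn |].
    rewrite AB by exact Hn'. lia.
  - intros m [[n [Hn E1]] [n' [Hn' E2]]].
    assert (A (A n) = A (A n' + n')).
    { rewrite AA, AB by assumption. lia. }
    apply A_inj in H.
    apply (disj n n'); [exact Hn|exact Hn'|exact H].
Qed.
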